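(* Let $d=\infty$, $C>0$, and let ${\boldsymbol\gamma}$ be product weights with $\sum_{j\in\mathbb N}\gamma_j<\infty$, and let $p=\mathrm{decay}((\gamma_j)_{j\in\mathbb N})$. Then $$\mathrm{decay}(T^\uparrow_{\infty,C}{\boldsymbol\gamma})=\mathrm{decay}({\boldsymbol\gamma})=p.$$
   Context: $\mathcal U_\infty$ is the set of finite subsets of $\mathbb N$; weights are families $(\gamma_u)_{u\in\mathcal U_\infty}$ of non-negative reals. Product weights: $\gamma_u=\prod_{j\in u}\gamma_j$ ($\gamma_\emptyset=1$) for a non-increasing sequence $(\gamma_j)_{j\in\mathbb N}$ of non-negative reals. For a family $(a_v)_{v\in V}$ of non-negative reals over a countably infinite index set, $\mathrm{decay}((a_v))=\sup\{\tau>0:\sum_va_v^{1/\tau}<\infty\}$, $\sup\emptyset=0$. For $C>0$: $(T^\uparrow_{\infty,C}{\boldsymbol\gamma})_u=\sum_{v\in\mathcal U_\infty,\,v\supseteq u}C^{2|v|}\gamma_v$ (well defined since $\sum_vC^{2|v|}\gamma_v<\infty$ here). *)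

(* Defs.v *)
From HB Require Import structures.
From mathcomp Require Import all_boot all_order all_algebra finmap.
From mathcomp Require Import all_classical all_reals all_analysis.
Set Implicit Arguments. Unset Strict Implicit. Unset Printing Implicit Defensive.
Import Order.TTheory GRing.Theory Num.Theory.
Local Open Scope classical_set_scope.
Local Open Scope ring_scope.

Section Defs.
Variable R : realType.

Definition decay {T : choiceType} (a : T -> R) : \bar R :=
  ereal_sup ([set (tau%:E) | tau in
     [set tau : R | 0 < tau /\
        (\esum_(v in [set: T]) ((powR (a v) tau^-1)%:E) < +oo)%E]]
   `|` [set 0%E]).

Definition prod_weights (gamma : nat -> R) (u : {fset nat}) : R :=
  \prod_(j <- u) gamma j.

(* (T^up_{oo,C} gamma)_u = sum_{v finite, v ⊇ u} C^{2|v|} gamma_v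
   (the sum is finite under the standing assumptions; fine takes the real value) *)
Definition Tup (C : R) (w : {fset nat} -> R) (u : {fset nat}) : R :=
  fine (\esum_(v in [set v : {fset nat} | fsubset u v])
          ((C ^+ (2 * #|` v|)%N * w v)%:E))%E.

End Defs.

(* Main.v *)
Require Import Defs.
From HB Require Import structures.
From mathcomp Require Import all_boot all_order all_algebra finmap.
From mathcomp Require Import all_classical all_reals all_analysis.
Import Order.TTheory GRing.Theory Num.Theory.
Local Open Scope classical_set_scope.
Local Open Scope ring_scope.

Section Aux.
Context {R : realType}.

Lemma esum_sub_le (T : choiceType) (A B : set T) (f : T -> \bar R) :
  A `<=` B -> (forall x, (0 <= f x)%E) ->
  (\esum_(x in A) f x <= \esum_(x in B) f x)%E.
Proof.
move=> AB f0; apply: ge_ereal_sup => _ [X [finX XA] <-]; apply: esum_ge.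
by exists X => //; split => //; exact: subset_trans XA AB.
Qed.

Lemma esumZ_le (T : choiceType) (P : set T) (c : R) (f : T -> \bar R) :
  0 <= c -> (forall x, (0 <= f x)%E) ->
  (\esum_(x in P) (c%:E * f x) <= c%:E * \esum_(x in P) f x)%E.
Proof.
move=> c0 f0; apply: ge_ereal_sup => _ [X [finX XP] <-].
rewrite -ge0_mule_fsumr //; apply: lee_wpmul2l; first by rewrite lee_fin.
by apply: esum_ge; exists X.
Qed.

Lemma prod_const_seq (T : Type) (s : seq T) (x : R) :
  \prod_(j <- s) x = x ^+ size s.
Proof. by elim: s => [|y s IH]; rewrite ?big_nil ?expr0 // big_cons IH exprS. Qed.

Lemma seq_bound (a : nat -> R) : (forall j, 0 <= a j) ->
  forall (L : seq nat) (F : seq {fset nat}), uniq F ->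
  (forall u, u \in F -> {subset u <= L}) ->
  \sum_(u <- F) \prod_(j <- u) a j <= \prod_(j <- L) (1 + a j).
Proof.
move=> a0; elim=> [|x L IH] F uF sF.
  have F0 : forall u, u \in F -> u = fset0.
    move=> u Fu; apply/fsetP => j; rewrite inE; apply/negbTE/negP.
    by move=> /(sF u Fu).
  rewrite big_nil (eq_big_seq (fun=> 1)); last first.
    by move=> u /F0 ->; rewrite big_seq_fset0.
  rewrite big_const_seq count_predT.
  have : (size F <= size [:: (fset0 : {fset nat})])%N.
    by apply: uniq_leq_size => // u /F0 ->; rewrite inE.
  by case: F {uF sF F0} => [|u [|]] //= _; rewrite ?addr0.
rewrite (bigID (fun u : {fset nat} => x \in u)) /= big_cons.
have P0 : 0 <= \prod_(j <- L) (1 + a j).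
  by apply: prodr_ge0 => j _; apply: addr_ge0 => //.
rewrite mulrDl mul1r addrC; apply: lerD.
  rewrite -big_filter; apply: IH; first exact: filter_uniq.
  move=> u; rewrite mem_filter => /andP[xu Fu] j ju.
  have := sF u Fu j ju; rewrite inE => /orP[/eqP jx|//].
  by move: xu; rewrite -jx ju.
rewrite (eq_bigr (fun u => a x * \prod_(j <- (u `\ x)%fset) a j)); last first.
  by move=> u xu; rewrite (big_fsetD1 x).
rewrite -mulr_sumr; apply: ler_wpM2l => //.
have -> : \sum_(u <- F | x \in u) \prod_(j <- (u `\ x)%fset) a j =
  \sum_(w <- map (fun u => (u `\ x)%fset) [seq u <- F | x \in u]) \prod_(j <- w) a j.
  by rewrite big_map big_filter.
apply: IH.
  rewrite map_inj_in_uniq; first exact: filter_uniq.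

  move=> u v; rewrite !mem_filter => /andP[xu _] /andP[xv _] e.
  by rewrite -(fsetD1K xu) -(fsetD1K xv) e.
move=> w /mapP[u]; rewrite mem_filter => /andP[xu Fu] -> j.
rewrite in_fsetD1 => /andP[jx ju].
by have := sF u Fu j ju; rewrite inE (negbTE jx).
Qed.


Lemma esum_seq_le (a : nat -> R) : (forall j, 0 <= a j) ->
  forall L : seq nat, uniq L ->
  ((\sum_(j <- L) a j)%:E <= \esum_(j in [set: nat]) (a j)%:E)%E.
Proof.
move=> a0 L uL; apply: esum_ge; exists [set` L]; first by split => //; exact: finite_seq.
by rewrite -sumEFin (fsbig_seq _ _ uL).
Qed.

Lemma prod_esum_le (b : nat -> R) (S : R) : (forall j, 0 <= b j) ->
  (forall L : seq nat, uniq L -> \sum_(j <- L) b j <= S) ->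
  forall P : set {fset nat},
  (\esum_(u in P) (\prod_(j <- u) b j)%:E <= (expR S)%:E)%E.
Proof.
move=> b0 bS P; apply: ge_ereal_sup => _ [X [finX XP] <-].
rewrite fsbig_finite //= sumEFin lee_fin.
set L := undup (flatten (map (fun u : {fset nat} => enum_fset u) (fset_set X))).
have H : \sum_(u <- fset_set X) \prod_(j <- u) b j <= \prod_(j <- L) (1 + b j).
  apply: seq_bound => //; first exact: fset_uniq.
  move=> u uX j ju; rewrite mem_undup; apply/flatten_mapP; by exists u.
apply: le_trans H _.
apply: le_trans (_ : \prod_(j <- L) expR (b j) <= _).
  by apply: ler_prod => j _; rewrite addr_ge0 //= expR_ge1Dx.
by rewrite -expR_sum ler_expR; apply: bS; exact: undup_uniq.
Qed.


Lemma powR_prod (s : R) (r : seq nat) (a : nat -> R) : (forall j, 0 <= a j) ->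
  (\prod_(j <- r) a j) `^ s = \prod_(j <- r) (a j `^ s).
Proof.
move=> a0; elim: r => [|x r IH]; first by rewrite !big_nil powR1.
rewrite !big_cons powRM ?IH //; exact: prodr_ge0.
Qed.

Lemma mul_lt_oo (c : R) (x : \bar R) : (0 <= x)%E -> (x < +oo)%E ->
  (c%:E * x < +oo)%E.
Proof. by case: x => [r| |] //= _ _; rewrite -EFinM ltry. Qed.

Lemma fin_bound (a : nat -> R) : (forall j, 0 <= a j) ->
  (\esum_(j in [set: nat]) (a j)%:E < +oo)%E ->
  forall L : seq nat, uniq L ->
  \sum_(j <- L) a j <= fine (\esum_(j in [set: nat]) (a j)%:E).
Proof.
move=> a0 af L uL; rewrite -lee_fin fineK; first exact: esum_seq_le.
by rewrite ge0_fin_numE // esum_ge0 // => j _; rewrite lee_fin.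
Qed.

Lemma singleton_le (f : {fset nat} -> \bar R) : (forall u, (0 <= f u)%E) ->
  (\esum_(j in [set: nat]) f [fset j]%fset <= \esum_(u in [set: {fset nat}]) f u)%E.
Proof.
move=> f0; rewrite -(esum_image [set: nat] (fun j => [fset j]%fset) f).
  exact: esum_sub_le.
by move=> x y _ _ /fset1_inj.
Qed.

Lemma tup_prod (C : R) (gamma : nat -> R) (v : {fset nat}) :
  C ^+ (2 * #|` v|) * prod_weights gamma v = \prod_(j <- v) (C ^+ 2 * gamma j).
Proof. by rewrite big_split /= prod_const_seq exprM. Qed.

Lemma Tup_ub (b : nat -> R) (Sb : R) : (forall j, 0 <= b j) ->
  (forall L : seq nat, uniq L -> \sum_(j <- L) b j <= Sb) ->
  forall u : {fset nat},
  (\esum_(v in [set v : {fset nat} | fsubset u v]) (\prod_(j <- v) b j)%:E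
    <= ((\prod_(j <- u) b j) * expR Sb)%:E)%E.
Proof.
move=> b0 bS u; apply: ge_ereal_sup => _ [X [finX XP] <-].
have E : forall v, X v -> \prod_(j <- v) b j =
    \prod_(j <- u) b j * \prod_(j <- (v `\` u)%fset) b j.
  move=> v Xv; have uv : fsubset u v := XP v Xv.
  rewrite (big_fsetID _ (fun j => j \in u)).
  have -> : [fset x | x in v & x \in u]%fset = u.
    apply/fsetP => j; rewrite !inE.
    by case: (boolP (j \in u)) => ju; rewrite ?andbT ?andbF // (fsubsetP uv).
  have -> : [fset x | x in v & x \notin u]%fset = (v `\` u)%fset.
    by apply/fsetP => j; rewrite !inE andbC.
  by [].
rewrite (eq_fsbigr (fun v => ((\prod_(j <- u) b j)%:E *
   (\prod_(j <- (v `\` u)%fset) b j)%:E)%E)); last first.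
  by move=> v /[!inE] /E ->; rewrite EFinM.
rewrite -ge0_mule_fsumr; last by move=> v; rewrite lee_fin; apply: prodr_ge0.
rewrite EFinM; apply: lee_wpmul2l; first by rewrite lee_fin prodr_ge0.
apply: le_trans (_ : \esum_(v in X) (\prod_(j <- (v `\` u)%fset) b j)%:E <= _)%E.
  by apply: esum_ge; exists X => //; split.
rewrite -(esum_image X (fun v => (v `\` u)%fset) (fun w => (\prod_(j <- w) b j)%:E)).
  exact: prod_esum_le.
move=> v1 v2 /set_mem X1 /set_mem X2 e; apply/fsetP => j.
have u1 : fsubset u v1 := XP _ X1; have u2 : fsubset u v2 := XP _ X2.
case: (boolP (j \in u)) => ju; first by rewrite (fsubsetP u1 _ ju) (fsubsetP u2 _ ju).
by have := congr1 (fun w => j \in w) e; rewrite /= !in_fsetD ju.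
Qed.

Lemma decay_eq (T1 T2 : choiceType) (a1 : T1 -> R) (a2 : T2 -> R) :
  (forall s : R, 0 < s ->
     (\esum_(v in [set: T1]) ((powR (a1 v) s)%:E) < +oo)%E <->
     (\esum_(v in [set: T2]) ((powR (a2 v) s)%:E) < +oo)%E) ->
  decay a1 = decay a2.
Proof.
move=> E; rewrite /decay; congr (ereal_sup (_ `|` _)).
apply/seteqP; split => _ [t [t0 H] <-]; exists t => //; split => //;
  by apply/(E t^-1); rewrite ?invr_gt0.
Qed.

End Aux.
Arguments esumZ_le {R T P c f}.

Theorem mainTheorem11 (R : realType) (C : R) (gamma : nat -> R) :
  0 < C ->
  (forall j, 0 <= gamma j) ->
  (forall i j, (i <= j)%N -> gamma j <= gamma i) ->
  (\esum_(j in [set: nat]) (gamma j)%:E < +oo)%E ->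
  decay (Tup C (prod_weights gamma)) = decay (prod_weights gamma) /\
  decay (prod_weights gamma) = decay gamma.
Proof.
move=> C0 g0 _ gfin.
pose b := fun j => C ^+ 2 * gamma j.
have c2 : 0 < C ^+ 2 by rewrite exprn_gt0.
have b0 : forall j, 0 <= b j by move=> j; rewrite /b mulr_ge0 // ltW.
have bfin : (\esum_(j in [set: nat]) (b j)%:E < +oo)%E.
  rewrite /b; under eq_esum do rewrite EFinM.
  apply: le_lt_trans (esumZ_le (ltW c2) _) _; first by move=> j; rewrite lee_fin.
  by apply: mul_lt_oo => //; apply: esum_ge0 => j _; rewrite lee_fin.
pose Sb := fine (\esum_(j in [set: nat]) (b j)%:E).
have bS := fin_bound _ b0 bfin.
have Tfin : forall u, (Tup C (prod_weights gamma) u)%:E =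
    \esum_(v in [set v : {fset nat} | fsubset u v]) (\prod_(j <- v) b j)%:E.
  move=> u; rewrite /Tup.
  rewrite (eq_esum (b := fun v : {fset nat} => (\prod_(j <- v) b j)%:E)); last first.
    by move=> v _; rewrite tup_prod.
  rewrite fineK // ge0_fin_numE; last by apply: esum_ge0 => v _; rewrite lee_fin prodr_ge0.
  exact: le_lt_trans (Tup_ub _ _ b0 bS u) (ltry _).
have T0 : forall u, 0 <= Tup C (prod_weights gamma) u.
  by move=> u; rewrite -lee_fin Tfin; apply: esum_ge0 => v _; rewrite lee_fin prodr_ge0.
have Tub : forall u, Tup C (prod_weights gamma) u <= \prod_(j <- u) b j * expR Sb.
  by move=> u; rewrite -lee_fin Tfin; exact: Tup_ub.
have Tlb : forall j, b j <= Tup C (prod_weights gamma) [fset j]%fset.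
  move=> j; rewrite -lee_fin Tfin; apply: esum_ge; exists [set [fset j]%fset].
    by split; [exact: finite_set1 | move=> v ->; exact: fsubset_refl].
  by rewrite fsbig_set1 big_seq_fset1.
have PW1 : forall j, prod_weights gamma [fset j]%fset = gamma j.
  by move=> j; rewrite /prod_weights big_seq_fset1.
have key : forall s : R, 0 < s ->
  ((\esum_(u in [set: {fset nat}]) ((powR (prod_weights gamma u) s)%:E) < +oo)%E <->
   (\esum_(j in [set: nat]) ((powR (gamma j) s)%:E) < +oo)%E) /\
  ((\esum_(u in [set: {fset nat}]) ((powR (Tup C (prod_weights gamma) u) s)%:E) < +oo)%E <->
   (\esum_(j in [set: nat]) ((powR (gamma j) s)%:E) < +oo)%E).
  move=> s s0.
  pose c := (C ^+ 2) `^ s.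
  have c0 : 0 < c by apply: powR_gt0.
  have bs : forall j, b j `^ s = c * gamma j `^ s by move=> j; rewrite powRM // ltW.
  have gs : forall j, gamma j `^ s = c^-1 * b j `^ s.
    by move=> j; rewrite bs mulrA mulVf ?mul1r // gt_eqF.
  have Hbs : (\esum_(j in [set: nat]) ((gamma j) `^ s)%:E < +oo)%E ->
      (\esum_(j in [set: nat]) ((b j) `^ s)%:E < +oo)%E.
    move=> H; under eq_esum do rewrite bs EFinM.
    apply: le_lt_trans (esumZ_le (ltW c0) _) _; first by move=> j; rewrite lee_fin powR_ge0.
    by apply: mul_lt_oo => //; apply: esum_ge0 => j _; rewrite lee_fin powR_ge0.
  split; split => H.
  - apply: le_lt_trans H.
    under eq_esum => j _ do rewrite -PW1.
    by apply: (singleton_le (fun u => ((prod_weights gamma u) `^ s)%:E)) => u;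
      rewrite lee_fin powR_ge0.
  - have gS := fin_bound _ (fun j => powR_ge0 (gamma j) s) H.
    apply: le_lt_trans (ltry (expR (fine (\esum_(j in [set: nat]) ((gamma j) `^ s)%:E)))).
    under eq_esum => u _ do rewrite /prod_weights powR_prod //.
    exact: (prod_esum_le _ _ (fun j => powR_ge0 (gamma j) s) gS).
  - have Hb : (\esum_(j in [set: nat]) ((b j) `^ s)%:E < +oo)%E.
      apply: le_lt_trans H.
      apply: le_trans (singleton_le (fun u => ((Tup C (prod_weights gamma) u) `^ s)%:E) _).
        apply: le_esum => j _; rewrite lee_fin; apply: ge0_ler_powR => //.
        + exact: ltW.
        + by rewrite nnegrE.
        + by rewrite nnegrE.
      by move=> u; rewrite lee_fin powR_ge0.
    under eq_esum do rewrite gs EFinM.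
    apply: le_lt_trans (esumZ_le _ _) _.
    + by rewrite invr_ge0 ltW.
    + by move=> j; rewrite lee_fin powR_ge0.
    by apply: mul_lt_oo => //; apply: esum_ge0 => j _; rewrite lee_fin powR_ge0.
  - have bsS := fin_bound _ (fun j => powR_ge0 (b j) s) (Hbs H).
    pose K := expR Sb.
    apply: le_lt_trans (_ : _ <= \esum_(u in [set: {fset nat}])
        ((K `^ s)%:E * (\prod_(j <- u) (b j `^ s))%:E))%E _.
      apply: le_esum => u _; rewrite -EFinM lee_fin.
      apply: (@le_trans _ _ ((\prod_(j <- u) b j * K) `^ s)).
        apply: (ge0_ler_powR (ltW s0)).
        + by rewrite nnegrE.
        + by rewrite nnegrE mulr_ge0 ?prodr_ge0 // expR_ge0.
        exact: Tub.
      by rewrite powRM ?prodr_ge0 ?expR_ge0 // powR_prod // mulrC.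
    apply: le_lt_trans (esumZ_le (powR_ge0 _ _) _) _.
      by move=> u; rewrite lee_fin prodr_ge0 // => j _; exact: powR_ge0.
    apply: mul_lt_oo.
      by apply: esum_ge0 => u _; rewrite lee_fin prodr_ge0 // => j _; exact: powR_ge0.
    exact: le_lt_trans (prod_esum_le _ _ (fun j => powR_ge0 (b j) s) bsS _) (ltry _).
split.
  apply: decay_eq => s s0; have [H1 H2] := key s s0; split.
    by move/H2/H1.
  by move/H1/H2.
by apply: decay_eq => s s0; have [H1 _] := key s s0.
Qed.
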